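(* Let $\Omega=\mathbb N$, $\Sigma=2^{\mathbb N}$ and $\mu$ a finite measure with $\mu(\{n\})>0$ for all $n$, and let $X(\mu)$ be a Banach sequence space (a vector space of real sequences with a complete norm). Then $X(\mu)$ has an equivalent norm under which it is a Banach function space if and only if $X(\mu)$ is a Banach rectangular function space.
   Context: Rectangular: for some $C>0$, $\chi_Af\in X(\mu)$ and $\|\chi_Af\|\le C\|f\|$ for all $f\in X(\mu)$, $A\subseteq\mathbb N$. A Banach function space (here) is a space of real sequences with a complete norm which is an ideal (if $|f|\le|g|$ coordinatewise and $g$ is in the space, then $f$ is in the space) and whose norm satisfies $\|f\|\le\|g\|$ whenever $|f|\le|g|$. *)

(* Defs.v *)
From Stdlib Require Import Reals.
Open Scope R_scope.

Definition seqR := nat -> R.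

Definition szero : seqR := fun _ => 0.
Definition sadd (f g : seqR) : seqR := fun n => f n + g n.
Definition sscal (c : R) (f : seqR) : seqR := fun n => c * f n.
Definition ssub (f g : seqR) : seqR := fun n => f n - g n.

Definition is_subspace (X : seqR -> Prop) : Prop :=
  X szero /\
  (forall f g, X f -> X g -> X (sadd f g)) /\
  (forall c f, X f -> X (sscal c f)).

(* N is a norm on X (only its values on X matter). *)
Definition is_norm_on (X : seqR -> Prop) (N : seqR -> R) : Prop :=
  (forall f, X f -> 0 <= N f) /\
  (forall f, X f -> N f = 0 -> f = szero) /\
  (forall c f, X f -> N (sscal c f) = Rabs c * N f) /\
  (forall f g, X f -> X g -> N (sadd f g) <= N f + N g).

Definition is_complete (X : seqR -> Prop) (N : seqR -> R) : Prop :=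
  forall u : nat -> seqR,
    (forall k, X (u k)) ->
    (forall eps, 0 < eps -> exists K, forall m n, (K <= m)%nat -> (K <= n)%nat ->
        N (ssub (u m) (u n)) < eps) ->
    exists f, X f /\
      forall eps, 0 < eps -> exists K, forall n, (K <= n)%nat -> N (ssub (u n) f) < eps.

Definition banach_seq_space (X : seqR -> Prop) (N : seqR -> R) : Prop :=
  is_subspace X /\ is_norm_on X N /\ is_complete X N.

Definition is_ideal (X : seqR -> Prop) : Prop :=
  forall f g, X g -> (forall n, Rabs (f n) <= Rabs (g n)) -> X f.

Definition is_lattice_norm (X : seqR -> Prop) (N : seqR -> R) : Prop :=
  forall f g, X f -> X g -> (forall n, Rabs (f n) <= Rabs (g n)) -> N f <= N g.

Definition banach_function_space (X : seqR -> Prop) (N : seqR -> R) : Prop :=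
  banach_seq_space X N /\ is_ideal X /\ is_lattice_norm X N.

Definition equivalent_norms (X : seqR -> Prop) (N1 N2 : seqR -> R) : Prop :=
  exists a b, 0 < a /\ 0 < b /\
    forall f, X f -> a * N1 f <= N2 f /\ N2 f <= b * N1 f.

Definition chi (A : nat -> bool) (f : seqR) : seqR :=
  fun n => if A n then f n else 0.

Definition is_rectangular (X : seqR -> Prop) (N : seqR -> R) : Prop :=
  exists C, 0 < C /\
    forall (f : seqR) (A : nat -> bool), X f -> X (chi A f) /\ N (chi A f) <= C * N f.

Definition banach_rectangular_function_space (X : seqR -> Prop) (N : seqR -> R) : Prop :=
  banach_seq_space X N /\ is_rectangular X N.

(* Main.v *)
Require Import Defs.
From Stdlib Require Import Reals Lra Lia ClassicalEpsilon Classical FunctionalExtensionality Arith.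
Open Scope R_scope.

Definition mulf (h f : seqR) : seqR := fun n => h n * f n.

Lemma half_small : forall eps, 0 < eps -> exists K, forall k, (K <= k)%nat -> (/2)^k < eps.
Proof.
  intros eps He. destruct (pow_lt_1_zero (/2) ltac:(rewrite Rabs_pos_eq; lra) eps He) as [K HK].
  exists K. intros k Hk. specialize (HK k Hk). rewrite Rabs_pos_eq in HK; auto.
  apply pow_le; lra.
Qed.

Lemma half_pos : forall k, 0 < (/2)^k.
Proof. intros; apply pow_lt; lra. Qed.

Lemma half_S : forall k, (/2)^(S k) = /2 * (/2)^k.
Proof. intros; reflexivity. Qed.

Lemma half_le1 : forall k, (/2)^k <= 1.
Proof. induction k; simpl; [lra|]. pose proof (half_pos k); lra. Qed.

Section Basics.
End Basics.

Lemma bs_facts X N : banach_seq_space X N ->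
  X szero /\ (forall f g, X f -> X g -> X (sadd f g)) /\ (forall c f, X f -> X (sscal c f)) /\
  (forall f, X f -> 0 <= N f) /\ (forall f, X f -> N f = 0 -> f = szero) /\
  (forall c f, X f -> N (sscal c f) = Rabs c * N f) /\
  (forall f g, X f -> X g -> N (sadd f g) <= N f + N g).
Proof. intros [[? [? ?]] [[? [? [? ?]]] _]]; tauto. Qed.

Lemma ssub_eq f g : ssub f g = sadd f (sscal (-1) g).
Proof. apply functional_extensionality; intro n; unfold ssub, sadd, sscal; ring. Qed.

Lemma X_sub X N : banach_seq_space X N -> forall f g, X f -> X g -> X (ssub f g).
Proof.
  intros HX f g Hf Hg. destruct (bs_facts X N HX) as (X0 & Xa & Xs & _).
  rewrite ssub_eq; auto.
Qed.

Lemma N_sub_sym X N : banach_seq_space X N -> forall f g, X f -> X g -> N (ssub f g) = N (ssub g f).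
Proof.
  intros HX f g Hf Hg. destruct (bs_facts X N HX) as (X0 & Xa & Xs & Nn & Nz & Nh & Nt).
  replace (ssub f g) with (sscal (-1) (ssub g f)).
  - rewrite Nh by (apply (X_sub X N); auto). replace (Rabs (-1)) with 1 by (unfold Rabs; destruct (Rcase_abs (-1)); lra); ring.
  - apply functional_extensionality; intro n; unfold ssub, sscal; ring.
Qed.

Lemma N_zero X N : banach_seq_space X N -> N szero = 0.
Proof.
  intros HX. destruct (bs_facts X N HX) as (X0 & Xa & Xs & Nn & Nz & Nh & Nt).
  replace szero with (sscal 0 szero).
  - rewrite Nh by auto. rewrite Rabs_R0; ring.
  - apply functional_extensionality; intro n; unfold sscal, szero; ring.
Qed.

Fixpoint s (h : seqR) (k : nat) : seqR :=
  match k with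
  | O => szero
  | S k => fun n => s h k n + (if Rle_dec ((/2)^(S k)) (h n - s h k n) then (/2)^(S k) else 0)
  end.

Definition Aset (h : seqR) (k : nat) : nat -> bool :=
  fun n => if Rle_dec ((/2)^(S k)) (h n - s h k n) then true else false.

Lemma s_bounds h : (forall n, 0 <= h n <= 1) -> forall k n, 0 <= h n - s h k n <= (/2)^k.
Proof.
  intros Hh k n. induction k.
  - simpl. unfold szero. specialize (Hh n). lra.
  - change (s h (S k) n) with (s h k n + (if Rle_dec ((/2)^(S k)) (h n - s h k n) then (/2)^(S k) else 0)).
    rewrite half_S in *. destruct (Rle_dec _ _); lra.
Qed.

Lemma mulf_sS h g k : mulf (s h (S k)) g =
  sadd (mulf (s h k) g) (sscal ((/2)^(S k)) (chi (Aset h k) g)).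
Proof.
  apply functional_extensionality; intro n. unfold mulf, sadd, sscal, chi, Aset.
  change (s h (S k) n) with (s h k n + (if Rle_dec ((/2)^(S k)) (h n - s h k n) then (/2)^(S k) else 0)).
  destruct (Rle_dec _ _); ring.
Qed.

Lemma mulf_s0 h g : mulf (s h 0) g = szero.
Proof. apply functional_extensionality; intro n; unfold mulf, szero; simpl; unfold szero; ring. Qed.

Definition rect X N C := forall (f : seqR) (A : nat -> bool), X f -> X (chi A f) /\ N (chi A f) <= C * N f.

Lemma u_in_X X N C h g : banach_seq_space X N -> rect X N C -> X g -> forall k, X (mulf (s h k) g).
Proof.
  intros HX HR Hg. destruct (bs_facts X N HX) as (X0 & Xa & Xs & Nn & Nz & Nh & Nt).
  induction k.
  - rewrite mulf_s0; auto.
  - rewrite mulf_sS. apply Xa; auto. apply Xs. apply HR; auto.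
Qed.

Lemma u_diff X N C h g : banach_seq_space X N -> rect X N C -> 0 < C -> X g ->
  forall k m, (k <= m)%nat ->
  N (ssub (mulf (s h m) g) (mulf (s h k) g)) <= ((/2)^k - (/2)^m) * C * N g.
Proof.
  intros HX HR HC Hg. destruct (bs_facts X N HX) as (X0 & Xa & Xs & Nn & Nz & Nh & Nt).
  pose proof (u_in_X X N C h g HX HR Hg) as Hu.
  intros k m Hkm. induction Hkm.
  - replace (ssub (mulf (s h k) g) (mulf (s h k) g)) with szero.
    + rewrite (N_zero X N HX). lra.
    + apply functional_extensionality; intro n; unfold ssub, szero; ring.
  - replace (ssub (mulf (s h (S m)) g) (mulf (s h k) g)) with
      (sadd (ssub (mulf (s h m) g) (mulf (s h k) g)) (sscal ((/2)^(S m)) (chi (Aset h m) g))).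
    2:{ rewrite mulf_sS. apply functional_extensionality; intro n; unfold ssub, sadd, sscal; ring. }
    destruct (HR g (Aset h m) Hg) as [Hc1 Hc2].
    eapply Rle_trans. apply Nt. apply (X_sub X N); auto. apply Xs; auto.
    rewrite Nh by auto. rewrite Rabs_pos_eq by (left; apply half_pos).
    rewrite half_S in *. pose proof (half_pos m). pose proof (Nn g Hg).
    assert (/2 * (/2)^m * N (chi (Aset h m) g) <= /2 * (/2)^m * (C * N g)).
    { apply Rmult_le_compat_l; auto. left; apply Rmult_lt_0_compat; lra. }
    nra.
Qed.

Lemma coord_bound X N C : banach_seq_space X N -> rect X N C -> 0 < C ->
  forall n, exists Kn, 0 <= Kn /\ forall v, X v -> Rabs (v n) <= Kn * N v.
Proof.
  intros HX HR HC n. destruct (bs_facts X N HX) as (X0 & Xa & Xs & Nn & Nz & Nh & Nt).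
  destruct (classic (exists w, X w /\ w n <> 0)) as [[w [Hw Hwn]] | Hno].
  - set (e := chi (fun m => Nat.eqb m n) w).
    assert (Xe : X e) by (apply HR; auto).
    assert (en : e n = w n) by (unfold e, chi; rewrite Nat.eqb_refl; auto).
    assert (Ne : 0 < N e).
    { destruct (Nn e Xe) as [|H0]; auto. symmetry in H0. apply Nz in H0; auto.
      exfalso. apply Hwn. rewrite <- en, H0. reflexivity. }
    exists (Rabs (w n) * C / N e). split.
    { apply Rmult_le_pos. apply Rmult_le_pos. apply Rabs_pos. lra. left; apply Rinv_0_lt_compat; auto. }
    intros v Hv. destruct (HR v (fun m => Nat.eqb m n) Hv) as [_ Hc].
    replace (chi (fun m => Nat.eqb m n) v) with (sscal (v n / w n) e) in Hc.
    2:{ apply functional_extensionality; intro m; unfold sscal, e, chi.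
        destruct (Nat.eqb m n) eqn:E. apply Nat.eqb_eq in E; subst. field; auto. ring. }
    rewrite Nh in Hc by auto.
    assert (Hwp : 0 < Rabs (w n)) by (apply Rabs_pos_lt; auto).
    assert (Hvn : Rabs (v n) = Rabs (w n) * Rabs (v n / w n)).
    { rewrite <- Rabs_mult. f_equal. field. auto. }
    rewrite Hvn.
    assert (Rabs (v n / w n) <= C * N v / N e).
    { apply (Rmult_le_reg_r (N e)); auto. unfold Rdiv. rewrite Rmult_assoc, Rinv_l by lra. lra. }
    replace (Rabs (w n) * C / N e * N v) with (Rabs (w n) * (C * N v / N e)) by (field; lra).
    apply Rmult_le_compat_l; lra.
  - exists 0. split; [lra|]. intros v Hv.
    assert (v n = 0) by (apply NNPP; intro H; apply Hno; eauto).
    rewrite H, Rabs_R0. pose proof (Nn v Hv). lra.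
Qed.

Definition convR (x : nat -> R) (a : R) := forall eps, 0 < eps -> exists K, forall k, (K <= k)%nat -> Rabs (x k - a) < eps.

Lemma conv_unique x a b : convR x a -> convR x b -> a = b.
Proof.
  intros Ha Hb. apply NNPP; intro Hne.
  assert (Hd : 0 < Rabs (a - b) / 2) by (assert (0 < Rabs (a-b)) by (apply Rabs_pos_lt; lra); lra).
  destruct (Ha _ Hd) as [K1 H1]. destruct (Hb _ Hd) as [K2 H2].
  specialize (H1 (max K1 K2) ltac:(lia)). specialize (H2 (max K1 K2) ltac:(lia)).
  pose proof (Rabs_triang (a - x (max K1 K2)) (x (max K1 K2) - b)).
  replace (a - x (max K1 K2) + (x (max K1 K2) - b)) with (a - b) in H by ring.
  rewrite <- Rabs_Ropp in H1. replace (- (x (max K1 K2) - a)) with (a - x (max K1 K2)) in H1 by ring.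
  lra.
Qed.

Lemma mult01 X N C h g : banach_seq_space X N -> rect X N C -> 0 < C -> X g ->
  (forall n, 0 <= h n <= 1) -> X (mulf h g) /\ N (mulf h g) <= C * N g.
Proof.
  intros HX HR HC Hg Hh. destruct (bs_facts X N HX) as (X0 & Xa & Xs & Nn & Nz & Nh & Nt).
  set (u := fun k => mulf (s h k) g).
  assert (Hu : forall k, X (u k)) by (intro; apply (u_in_X X N C); auto).
  pose proof (Nn g Hg) as Ng.
  assert (Hd : forall k m, (k <= m)%nat -> N (ssub (u m) (u k)) <= (/2)^k * C * N g).
  { intros k m Hkm. eapply Rle_trans. apply (u_diff X N C h g); auto.
    pose proof (half_pos m). assert (0 <= C * N g) by nra. nra. }
  assert (Hcau : forall eps, 0 < eps -> exists K, forall m n, (K <= m)%nat -> (K <= n)%nat ->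
        N (ssub (u m) (u n)) < eps).
  { intros eps He. assert (0 < eps / (C * N g + 1)).
    { apply Rdiv_lt_0_compat; auto. nra. }
    destruct (half_small _ H) as [K HK]. exists K. intros m n Hm Hn.
    assert (Hb : forall k m, (K <= k)%nat -> (k <= m)%nat -> N (ssub (u m) (u k)) < eps).
    { intros k m' Hk Hkm. eapply Rle_lt_trans. apply Hd; auto.
      specialize (HK k Hk). pose proof (half_pos k).
      apply (Rmult_lt_compat_r (C * N g + 1)) in HK; [|nra].
      unfold Rdiv in HK. rewrite Rmult_assoc, Rinv_l in HK by nra. nra. }
    destruct (Nat.le_ge_cases n m).
    - apply Hb; auto.
    - rewrite (N_sub_sym X N HX) by auto. apply Hb; auto. }
  destruct HX as (Hs & Hn & Hcomp). destruct (Hcomp u Hu Hcau) as [F [HF HFc]].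
  assert (HX : banach_seq_space X N) by (repeat split; auto).
  assert (EF : F = mulf h g).
  { apply functional_extensionality; intro n.
    apply (conv_unique (fun k => u k n)).
    - destruct (coord_bound X N C HX HR HC n) as [Kn [HKn HKb]].
      intros eps He. assert (0 < eps / (Kn + 1)) by (apply Rdiv_lt_0_compat; lra).
      destruct (HFc _ H) as [K HK]. exists K. intros k Hk.
      specialize (HK k Hk). specialize (HKb (ssub (u k) F) ltac:(apply (X_sub X N); auto)).
      unfold ssub in HKb at 1. eapply Rle_lt_trans. apply HKb.
      assert (Kn * N (ssub (u k) F) <= Kn * (eps / (Kn + 1))) by (apply Rmult_le_compat_l; lra).
      assert (Kn * (eps / (Kn + 1)) < eps).
      { apply (Rmult_lt_reg_r (Kn + 1)); [lra|]. unfold Rdiv.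
        replace (Kn * (eps * / (Kn + 1)) * (Kn + 1)) with (Kn * eps) by (field; lra). nra. }
      lra.
    - intros eps He. assert (0 < eps / (Rabs (g n) + 1)) by (apply Rdiv_lt_0_compat; pose proof (Rabs_pos (g n)); lra).
      destruct (half_small _ H) as [K HK]. exists K. intros k Hk. specialize (HK k Hk).
      unfold u, mulf. replace (s h k n * g n - h n * g n) with ((s h k n - h n) * g n) by ring.
      rewrite Rabs_mult. pose proof (s_bounds h Hh k n).
      rewrite Rabs_minus_sym, Rabs_pos_eq by lra.
      pose proof (Rabs_pos (g n)).
      apply (Rmult_lt_compat_r (Rabs (g n) + 1)) in HK; [|lra].
      unfold Rdiv in HK. rewrite Rmult_assoc, Rinv_l in HK by lra. nra. }
  rewrite <- EF. split; auto.
  assert (Huk : forall k, N (u k) <= C * N g).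
  { intro k. specialize (Hd 0%nat k ltac:(lia)).
    replace (ssub (u k) (u 0%nat)) with (u k) in Hd.
    - simpl in Hd. lra.
    - unfold u. rewrite mulf_s0. apply functional_extensionality; intro; unfold ssub, szero; ring. }
  apply Rnot_lt_le; intro Hlt.
  destruct (HFc (N F - C * N g)) as [K HK]; [lra|].
  specialize (HK K (Nat.le_refl K)).
  assert (F = sadd (u K) (ssub F (u K))) by (apply functional_extensionality; intro; unfold sadd, ssub; ring).
  pose proof (Nt (u K) (ssub F (u K)) (Hu K) ltac:(apply (X_sub X N); auto)).
  rewrite <- H in H0. rewrite (N_sub_sym X N HX) in H0 by auto. specialize (Huk K). lra.
Qed.

Lemma mult1 X N C h g : banach_seq_space X N -> rect X N C -> 0 < C -> X g ->
  (forall n, Rabs (h n) <= 1) -> X (mulf h g) /\ N (mulf h g) <= (2 * C + 1) * N g.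
Proof.
  intros HX HR HC Hg Hh. destruct (bs_facts X N HX) as (X0 & Xa & Xs & Nn & Nz & Nh & Nt).
  set (h' := fun n => (h n + 1) / 2).
  assert (Hh' : forall n, 0 <= h' n <= 1).
  { intro n. specialize (Hh n). unfold h'. unfold Rabs in Hh; destruct (Rcase_abs (h n)); lra. }
  destruct (mult01 X N C h' g HX HR HC Hg Hh') as [H1 H2].
  assert (E : mulf h g = sadd (sscal 2 (mulf h' g)) (sscal (-1) g)).
  { apply functional_extensionality; intro n; unfold mulf, sadd, sscal, h'; field. }
  rewrite E. split; auto.
  eapply Rle_trans. apply Nt; auto. rewrite !Nh by auto.
  replace (Rabs 2) with 2 by (rewrite Rabs_pos_eq; lra).
  replace (Rabs (-1)) with 1 by (unfold Rabs; destruct (Rcase_abs (-1)); lra). lra.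
Qed.

Definition Eset (N : seqR -> R) (f : seqR) (r : R) : Prop :=
  exists h, (forall n, Rabs (h n) <= 1) /\ r = N (mulf h f).

Definition N' (N : seqR -> R) (f : seqR) : R := epsilon (inhabits 0) (fun m => is_lub (Eset N f) m).

Lemma mulf1 f : mulf (fun _ => 1) f = f.
Proof. apply functional_extensionality; intro; unfold mulf; ring. Qed.

Lemma N'_lub X N C : banach_seq_space X N -> rect X N C -> 0 < C ->
  forall f, X f -> is_lub (Eset N f) (N' N f).
Proof.
  intros HX HR HC f Hf. unfold N'. apply epsilon_spec.
  destruct (completeness (Eset N f)) as [m Hm].
  - exists ((2 * C + 1) * N f). intros r [h [Hh ->]]. apply (mult1 X N C); auto.
  - exists (N f). exists (fun _ => 1). split. intro; rewrite Rabs_R1; lra. rewrite mulf1; auto.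
  - eauto.
Qed.

Lemma N'_ge X N C : banach_seq_space X N -> rect X N C -> 0 < C ->
  forall f, X f -> N f <= N' N f.
Proof.
  intros HX HR HC f Hf. destruct (N'_lub X N C HX HR HC f Hf) as [Hu _]. apply Hu.
  exists (fun _ => 1). split. intro; rewrite Rabs_R1; lra. rewrite mulf1; auto.
Qed.

Lemma N'_le X N C : banach_seq_space X N -> rect X N C -> 0 < C ->
  forall f, X f -> N' N f <= (2 * C + 1) * N f.
Proof.
  intros HX HR HC f Hf. destruct (N'_lub X N C HX HR HC f Hf) as [_ Hl]. apply Hl.
  intros r [h [Hh ->]]. apply (mult1 X N C); auto.
Qed.

Lemma N'_ub X N C : banach_seq_space X N -> rect X N C -> 0 < C ->
  forall f b, X f -> (forall h, (forall n, Rabs (h n) <= 1) -> N (mulf h f) <= b) -> N' N f <= b.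
Proof.
  intros HX HR HC f b Hf Hb. destruct (N'_lub X N C HX HR HC f Hf) as [_ Hl]. apply Hl.
  intros r [h [Hh ->]]. auto.
Qed.

Lemma N'_upper X N C : banach_seq_space X N -> rect X N C -> 0 < C ->
  forall f h, X f -> (forall n, Rabs (h n) <= 1) -> N (mulf h f) <= N' N f.
Proof.
  intros HX HR HC f h Hf Hh. destruct (N'_lub X N C HX HR HC f Hf) as [Hu _]. apply Hu. exists h; auto.
Qed.

Lemma N'_scal_le X N C : banach_seq_space X N -> rect X N C -> 0 < C ->
  forall c f, X f -> N' N (sscal c f) <= Rabs c * N' N f.
Proof.
  intros HX HR HC c f Hf. destruct (bs_facts X N HX) as (X0 & Xa & Xs & Nn & Nz & Nh & Nt).
  apply (N'_ub X N C); auto. intros h Hh.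
  replace (mulf h (sscal c f)) with (sscal c (mulf h f))
    by (apply functional_extensionality; intro; unfold mulf, sscal; ring).
  destruct (mult1 X N C h f HX HR HC Hf Hh).
  rewrite Nh by auto. apply Rmult_le_compat_l. apply Rabs_pos. apply (N'_upper X N C); auto.
Qed.

Theorem corollary4p6 (mu : nat -> R)
  (mu_pos : forall n, 0 < mu n)
  (mu_finite : exists l, infinite_sum mu l)
  (X : seqR -> Prop) (N : seqR -> R)
  (HX : banach_seq_space X N) :
  (exists N', equivalent_norms X N N' /\ banach_function_space X N') <->
  banach_rectangular_function_space X N.
Proof.
  destruct (bs_facts X N HX) as (X0 & Xa & Xs & Nn & Nz & Nh & Nt).
  split.
  - intros [M [[a [b [Ha [Hb Heq]]]] [HM [Hid Hlat]]]].
    split; auto. exists (b / a). split. apply Rdiv_lt_0_compat; auto.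
    intros f A Hf.
    assert (Hle : forall n, Rabs (chi A f n) <= Rabs (f n)).
    { intro n; unfold chi; destruct (A n); [lra|]. rewrite Rabs_R0; apply Rabs_pos. }
    assert (XA : X (chi A f)) by (apply (Hid _ f); auto).
    split; auto.
    destruct (Heq _ XA) as [H1 _]. destruct (Heq _ Hf) as [_ H2].
    pose proof (Hlat _ _ XA Hf Hle).
    apply (Rmult_le_reg_l a); auto.
    replace (a * (b / a * N f)) with (b * N f) by (field; lra). lra.
  - intros [_ [C [HC HR0]]].
    assert (HR : rect X N C) by exact HR0.
    exists (N' N).
    assert (Hge := N'_ge X N C HX HR HC). assert (Hle := N'_le X N C HX HR HC).
    assert (Hsub : forall f g, X f -> X g -> X (ssub f g)) by (apply (X_sub X N); auto).
    split.
    { exists 1, (2 * C + 1). split; [lra|split; [lra|]]. intros f Hf. split; [specialize (Hge f Hf); lra | apply Hle; auto]. }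
    split; [split; [|split] |split].
    + destruct HX; tauto.
    + split; [|split; [|split]].
      * intros f Hf. specialize (Hge f Hf). specialize (Nn f Hf). lra.
      * intros f Hf H0. apply Nz; auto. specialize (Hge f Hf). specialize (Nn f Hf). lra.
      * intros c f Hf. apply Rle_antisym. apply (N'_scal_le X N C); auto.
        destruct (Req_dec c 0) as [->|Hc].
        { rewrite Rabs_R0, Rmult_0_l. specialize (Hge (sscal 0 f) (Xs 0 f Hf)).
          specialize (Nn (sscal 0 f) (Xs 0 f Hf)). lra. }
        pose proof (N'_scal_le X N C HX HR HC (/c) (sscal c f) (Xs c f Hf)).
        replace (sscal (/ c) (sscal c f)) with f in H
          by (apply functional_extensionality; intro; unfold sscal; field; auto).
        rewrite Rabs_inv in H. assert (0 < Rabs c) by (apply Rabs_pos_lt; auto).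
        apply (Rmult_le_compat_l (Rabs c)) in H; [|lra].
        rewrite <- Rmult_assoc, Rinv_r in H by lra. lra.
      * intros f g Hf Hg. apply (N'_ub X N C); auto. intros h Hh.
        replace (mulf h (sadd f g)) with (sadd (mulf h f) (mulf h g))
          by (apply functional_extensionality; intro; unfold mulf, sadd; ring).
        destruct (mult1 X N C h f HX HR HC Hf Hh). destruct (mult1 X N C h g HX HR HC Hg Hh).
        eapply Rle_trans. apply Nt; auto.
        pose proof (N'_upper X N C HX HR HC f h Hf Hh). pose proof (N'_upper X N C HX HR HC g h Hg Hh). lra.
    + intros u Hu Hcau. destruct HX as (_ & _ & Hcomp).
      destruct (Hcomp u Hu) as [F [HF HFc]].
      { intros eps He. destruct (Hcau eps He) as [K HK]. exists K. intros m n Hm Hn.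
        specialize (HK m n Hm Hn). specialize (Hge (ssub (u m) (u n)) (Hsub _ _ (Hu m) (Hu n))). lra. }
      exists F. split; auto. intros eps He.
      destruct (HFc (eps / (2 * C + 1))) as [K HK]. apply Rdiv_lt_0_compat; lra.
      exists K. intros n Hn. specialize (HK n Hn).
      eapply Rle_lt_trans. apply Hle. apply Hsub; auto.
      apply (Rmult_lt_compat_l (2 * C + 1)) in HK; [|lra].
      replace ((2 * C + 1) * (eps / (2 * C + 1))) with eps in HK by (field; lra). lra.
    + intros f g Hg Hfg.
      set (k := fun n => if Req_EM_T (g n) 0 then 0 else f n / g n).
      assert (Ek : f = mulf k g).
      { apply functional_extensionality; intro n; unfold mulf, k. destruct (Req_EM_T (g n) 0) as [E|E].
        - specialize (Hfg n). rewrite E, Rabs_R0 in Hfg. pose proof (Rabs_pos (f n)).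
          assert (Rabs (f n) = 0) by lra. rewrite Rmult_0_l. destruct (Req_dec (f n) 0); auto; exfalso; apply Rabs_no_R0 in H1; auto.
        - field; auto. }
      assert (Hk : forall n, Rabs (k n) <= 1).
      { intro n; unfold k. destruct (Req_EM_T (g n) 0) as [E|E]. rewrite Rabs_R0; lra.
        unfold Rdiv. rewrite Rabs_mult, Rabs_inv. specialize (Hfg n).
        assert (0 < Rabs (g n)) by (apply Rabs_pos_lt; auto).
        apply (Rmult_le_reg_r (Rabs (g n))); auto. rewrite Rmult_assoc, Rinv_l by lra. lra. }
      rewrite Ek. apply (mult1 X N C); auto.
    + intros f g Hf Hg Hfg. apply (N'_ub X N C); auto. intros h Hh.
      set (k := fun n => if Req_EM_T (g n) 0 then 0 else f n / g n).
      assert (Ek : f = mulf k g).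
      { apply functional_extensionality; intro n; unfold mulf, k. destruct (Req_EM_T (g n) 0) as [E|E].
        - specialize (Hfg n). rewrite E, Rabs_R0 in Hfg. pose proof (Rabs_pos (f n)).
          assert (Rabs (f n) = 0) by lra. rewrite Rmult_0_l. destruct (Req_dec (f n) 0); auto; exfalso; apply Rabs_no_R0 in H1; auto.
        - field; auto. }
      assert (Hk : forall n, Rabs (k n) <= 1).
      { intro n; unfold k. destruct (Req_EM_T (g n) 0) as [E|E]. rewrite Rabs_R0; lra.
        unfold Rdiv. rewrite Rabs_mult, Rabs_inv. specialize (Hfg n).
        assert (0 < Rabs (g n)) by (apply Rabs_pos_lt; auto).
        apply (Rmult_le_reg_r (Rabs (g n))); auto. rewrite Rmult_assoc, Rinv_l by lra. lra. }
      replace (mulf h f) with (mulf (fun n => h n * k n) g)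
        by (rewrite Ek; apply functional_extensionality; intro; unfold mulf; ring).
      apply (N'_upper X N C); auto.
      intro n. rewrite Rabs_mult. specialize (Hh n). specialize (Hk n).
      pose proof (Rabs_pos (h n)). pose proof (Rabs_pos (k n)). nra.
Qed.
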